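(* Let $n\ge 2$, $k>k(n)$, and let $0<z_1<z_2$ be the two positive roots of $z\mapsto H(z,k)$. Then for every $z\in[z_1,z_2]$ the quintuple $(z+1,\,k,\,1,\,z+1,\,k+1)$ is admissible.
   Context: $H(z,k)=-nz^3+(k^2-3n)z^2-(3n+2k)z-(n-1)$; $k(n)=3\sqrt n\cos\big(\tfrac13\arccos(1/\sqrt n)\big)$. A quintuple $(a,b,c,d,\theta)$ is admissible if $d\ge a>c>0$, $\theta>b\ge 0$, and $(a-c)^2\theta^2-a(\theta-b)\big[(2\theta+na)(a-c)+a(n-1)(\theta-b)\big]\ge 0$. *)

(* Defs.v *)
From Stdlib Require Import Reals.
Open Scope R_scope.

Definition H (n : R) (z k : R) : R :=
  - n * z ^ 3 + (k ^ 2 - 3 * n) * z ^ 2 - (3 * n + 2 * k) * z - (n - 1).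

Definition kcrit (n : R) : R :=
  3 * sqrt n * cos (/ 3 * acos (/ sqrt n)).

Definition admissible (n : R) (a b c d theta : R) : Prop :=
  d >= a /\ a > c /\ c > 0 /\ theta > b /\ b >= 0 /\
  (a - c) ^ 2 * theta ^ 2
    - a * (theta - b) * ((2 * theta + n * a) * (a - c) + a * (n - 1) * (theta - b))
  >= 0.

(* Main.v *)
Require Import Defs.
From Stdlib Require Import Reals Lra Psatz.
Open Scope R_scope.

Lemma kcrit_pos (n : R) : 1 <= n -> 0 < kcrit n.
Proof.
  intro Hn. unfold kcrit.
  assert (Hs : 0 < sqrt n) by (apply sqrt_lt_R0; lra).
  assert (Hc : 0 < cos (/ 3 * acos (/ sqrt n))).
  { destruct (acos_bound (/ sqrt n)) as [A B].
    apply cos_gt_0; pose proof PI_RGT_0; lra. }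
  assert (0 < 3 * sqrt n) by lra.
  apply Rmult_lt_0_compat; lra.
Qed.

Theorem mainTheorem6 (n : nat) (k z1 z2 : R) :
  (2 <= n)%nat ->
  k > kcrit (INR n) ->
  0 < z1 -> z1 < z2 ->
  H (INR n) z1 k = 0 -> H (INR n) z2 k = 0 ->
  (forall z, 0 < z -> H (INR n) z k = 0 -> z = z1 \/ z = z2) ->
  forall z, z1 <= z <= z2 ->
    admissible (INR n) (z + 1) k 1 (z + 1) (k + 1).
Proof.
  intros Hn Hk Hz1 H12 Hr1 Hr2 _ z [Hza Hzb].
  assert (HN : 2 <= INR n) by (apply (le_INR 2 n) in Hn; simpl in Hn; lra).
  set (N := INR n) in *.
  assert (Kp : 0 < k) by (pose proof (kcrit_pos N ltac:(lra)); lra).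
  set (p := k ^ 2 - 3 * N).
  set (q := - (3 * N + 2 * k)).
  set (E := - N * (z1 ^ 2 + z1 * z2 + z2 ^ 2) + p * (z1 + z2) + q).
  assert (HE : E = 0).
  { assert (X : (z1 - z2) * E = H N z1 k - H N z2 k) by (unfold E, p, q, H; ring).
    rewrite Hr1, Hr2 in X.
    assert (X2 : (z1 - z2) * E = 0) by lra.
    destruct (Rmult_integral _ _ X2); lra. }
  assert (Hid : forall w, H N w k = (w - z1) * (w - z2) * (p - N * (w + z1 + z2))).
  { intro w.
    assert (X : H N w k - (w - z1) * (w - z2) * (p - N * (w + z1 + z2))
            = H N z1 k + (w - z1) * E) by (unfold E, p, q, H; ring).
    rewrite Hr1, HE in X. lra. }
  assert (Hc : p - N * (z1 + z2) < 0).
  { pose proof (Hid 0) as X. unfold H in X.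
    assert (z1 * z2 * (p - N * (z1 + z2)) = -(N - 1)) by (unfold p in *; nra).
    assert (0 < z1 * z2) by nra.
    nra. }
  unfold admissible. repeat split; try lra.
  assert (Hval : (z + 1 - 1) ^ 2 * (k + 1) ^ 2 -
   (z + 1) * (k + 1 - k) *
   ((2 * (k + 1) + N * (z + 1)) * (z + 1 - 1) + (z + 1) * (N - 1) * (k + 1 - k))
   = H N z k) by (unfold H; ring).
  rewrite Hval, Hid.
  assert (p - N * (z + z1 + z2) <= 0) by nra.
  assert (0 <= (z - z1) * (z2 - z)) by nra.
  nra.
Qed.
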